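(* For every integer $n\geq 1$ and every admissible matrix $\Theta$, the $K_0$ group of the noncommutative $\mathbb{R}^{2n}$ satisfies $K_0(A(\mathbb{R}^{2n}_\Theta))\cong\mathbb{Z}$.
   Context: Let $\Theta=(\theta_{pq})_{1\leq p,q\leq 2n}$ be a real skew-symmetric matrix with $\theta_{2m-1,2m}=-\theta_{2m,2m-1}>0$ for $m=1,\dots,n$ and all other entries $0$. The noncommutative $\mathbb{R}^{2n}$, $A(\mathbb{R}^{2n}_\Theta)$, is the unital $*$-algebra generated by $2n$ self-adjoint elements $x_1,\dots,x_{2n}$ subject to $[x_p,x_q]=x_px_q-x_qx_p=-i\theta_{pq}$ for all $p,q$ (so $[x_{2m-1},x_{2m}]=-i\theta_{2m-1,2m}$ and all other pairs commute); every element is a finite sum $\sum a_{p_1,\dots,p_{2n}}x_1^{p_1}\cdots x_{2n}^{p_{2n}}$ with complex coefficients (these ordered monomials being linearly independent), $x_j^0=1$. A projector over a $*$-algebra $A$ is a square matrix $p$ with entries in $A$ satisfying $p^2=p=p^*$. Projectors $p,q$ are equivalent if for some $N$ there is a unitary $u\in M_N(A)$ with $\mathrm{diag}(p,0)=u\,\mathrm{diag}(q,0)\,u^*$. Equivalence classes form a semigroup under $p+q:=\mathrm{diag}(p,q)$, and $K_0(A)$ is its Grothendieck group. *)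

(* Defs.v *)
From HB Require Import structures.
From mathcomp Require Import all_boot all_order all_algebra.
From mathcomp Require Import reals complex.
Set Implicit Arguments. Unset Strict Implicit. Unset Printing Implicit Defensive.
Import Order.TTheory GRing.Theory Num.Theory.
Local Open Scope ring_scope.

(* Admissible Theta (0-indexed: pairs (2m, 2m+1) for m < n). *)
Definition admissible (R : realType) (n : nat) (Theta : 'M[R]_(n.*2)) : Prop :=
  (forall p q : 'I_(n.*2), ~~ odd p -> val q = (val p).+1 ->
      0 < Theta p q /\ Theta q p = - Theta p q) /\
  (forall p q : 'I_(n.*2),
      ~ (~~ odd p /\ val q = (val p).+1) ->
      ~ (~~ odd q /\ val p = (val q).+1) -> Theta p q = 0).

Definition is_star (R : realType) (A : algType R[i]) (s : A -> A) : Prop :=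
  [/\ involutive s,
      forall a b, s (a + b) = s a + s b,
      forall (c : R[i]) a, s (c *: a) = conjc c *: s a &
      forall a b, s (a * b) = s b * s a].

Section StarMatrices.
Variables (R : realType) (A : algType R[i]) (s : A -> A).

Definition mxstar k l (M : 'M[A]_(k, l)) : 'M[A]_(l, k) :=
  \matrix_(i, j) s (M j i).

Definition is_projector k (p : 'M[A]_k) : Prop :=
  p *m p = p /\ mxstar p = p.

Definition is_unitary N (u : 'M[A]_N) : Prop :=
  u *m mxstar u = 1%:M /\ mxstar u *m u = 1%:M.

(* diag(p, 0) in M_N (meaningful when k <= N). *)
Definition padmx k N (p : 'M[A]_k) : 'M[A]_N :=
  \matrix_(i < N, j < N)
    (match (insub (val i) : option 'I_k), (insub (val j) : option 'I_k) with
     | Some i', Some j' => p i' j'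
     | _, _ => 0
     end).

Definition pmx := {k : nat & 'M[A]_k}.

Definition is_proj (p : pmx) : Prop := is_projector (projT2 p).

Definition proj_equiv (p q : pmx) : Prop :=
  exists N (u : 'M[A]_N), (projT1 p <= N)%N /\ (projT1 q <= N)%N /\
    is_unitary u /\
    padmx N (projT2 p) = u *m padmx N (projT2 q) *m mxstar u.

Definition pdsum (p q : pmx) : pmx :=
  existT _ (projT1 p + projT1 q)%N (block_mx (projT2 p) 0 0 (projT2 q)).

(* Grothendieck group: formal differences [p] - [q], with
   [p]-[q] = [p']-[q'] iff p + q' + r ~ p' + q + r for some projector r. *)
Definition groth_rel (p q p' q' : pmx) : Prop :=
  exists r : pmx, is_proj r /\
    proj_equiv (pdsum (pdsum p q') r) (pdsum (pdsum p' q) r).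

(* K_0(A) is isomorphic to Z: there is a map from formal differences of
   projectors to int that descends to a bijective group homomorphism
   K_0(A) -> Z (addition of classes being ([p]-[q]) + ([p']-[q']) =
   [p + p'] - [q + q']). *)
Definition K0_iso_Z : Prop :=
  exists f : pmx -> pmx -> int,
    [/\ forall p q p' q', is_proj p -> is_proj q -> is_proj p' -> is_proj q' ->
          (f p q = f p' q' <-> groth_rel p q p' q'),
        forall z : int, exists p q, [/\ is_proj p, is_proj q & f p q = z] &
        forall p q p' q', is_proj p -> is_proj q -> is_proj p' -> is_proj q' ->
          f (pdsum p p') (pdsum q q') = f p q + f p' q'].

End StarMatrices.

Definition monomial (R : realType) (A : algType R[i]) (m : nat)
    (x : 'I_m -> A) (e : {ffun 'I_m -> nat}) : A :=
  \prod_(i < m) x i ^+ e i.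

Definition pbw_basis (R : realType) (A : algType R[i]) (m : nat)
    (x : 'I_m -> A) : Prop :=
  (forall a : A, exists (s : seq {ffun 'I_m -> nat}) (c : {ffun 'I_m -> nat} -> R[i]),
      a = \sum_(e <- s) c e *: monomial x e) /\
  (forall (s : seq {ffun 'I_m -> nat}) (c : {ffun 'I_m -> nat} -> R[i]),
      uniq s -> \sum_(e <- s) c e *: monomial x e = 0 ->
      forall e, e \in s -> c e = 0).

(* Main.v *)
Require Import Defs.
From HB Require Import structures.
From mathcomp Require Import all_boot all_order all_fingroup all_algebra zify.
From mathcomp Require Import reals complex.
From Stdlib Require Import ClassicalEpsilon.
Import Order.TTheory GRing.Theory Num.Theory.
Local Open Scope ring_scope.

Module Aux.
Set Implicit Arguments. Unset Strict Implicit. Unset Printing Implicit Defensive.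

Section Star.
Variables (R : realType) (A : algType R[i]) (s : A -> A).
Hypothesis Hs : is_star s.

Lemma sK : involutive s. Proof. by case: Hs. Qed.
Lemma sD a b : s (a + b) = s a + s b. Proof. by case: Hs. Qed.
Lemma sZ c a : s (c *: a) = conjc c *: s a. Proof. by case: Hs. Qed.
Lemma sM a b : s (a * b) = s b * s a. Proof. by case: Hs. Qed.
Lemma s0 : s 0 = 0.
Proof. have h := sD 0 0; rewrite addr0 in h.
by apply: (addrI (s 0)); rewrite addr0 -h. Qed.
Lemma sN a : s (- a) = - s a.
Proof.
have h : conjc (-1 : R[i]) = -1 by change ((-1 : R[i])^* = -1); rewrite rmorphN1.
by rewrite -scaleN1r sZ h scaleN1r. Qed.
Lemma sB a b : s (a - b) = s a - s b.
Proof. by rewrite sD sN. Qed.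
Lemma s1 : s 1 = 1.
Proof.
have h : forall b, b * s 1 = b.
  by move=> b; rewrite -[b]sK -sM mul1r.
by rewrite -[s 1]mul1r h.
Qed.
Lemma s_alg c : s (c *: 1) = conjc c *: 1.
Proof. by rewrite sZ s1. Qed.
Lemma s_sum I (r : seq I) (P : pred I) (F : I -> A) :
  s (\sum_(i <- r | P i) F i) = \sum_(i <- r | P i) s (F i).
Proof.
elim: r => [|a r IH]; first by rewrite !big_nil s0.
by rewrite !big_cons; case: (P a); rewrite ?sD IH.
Qed.

Definition Dr (y a : A) := y * a - a * y.

Lemma DrD y a b : Dr y (a + b) = Dr y a + Dr y b.
Proof. by rewrite /Dr mulrDr mulrDl opprD addrACA. Qed.
Lemma Dr0 y : Dr y 0 = 0.
Proof. by rewrite /Dr mulr0 mul0r subrr. Qed.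
Lemma DrZ y c a : Dr y (c *: a) = c *: Dr y a.
Proof. by rewrite /Dr scalerBr scalerAr scalerAl. Qed.
Lemma DrN y a : Dr y (- a) = - Dr y a.
Proof. by rewrite -scaleN1r DrZ scaleN1r. Qed.
Lemma DrM y a b : Dr y (a * b) = Dr y a * b + a * Dr y b.
Proof.
rewrite /Dr mulrBl mulrBr !mulrA addrA; congr (_ + _).
by rewrite subrK.
Qed.
Lemma Dr_alg y c : Dr y (c *: 1) = 0.
Proof. by rewrite DrZ /Dr mulr1 mul1r subrr scaler0. Qed.
Lemma Dr_sum y I (r : seq I) (P : pred I) (F : I -> A) :
  Dr y (\sum_(i <- r | P i) F i) = \sum_(i <- r | P i) Dr y (F i).
Proof.
elim: r => [|a r IH]; first by rewrite !big_nil Dr0.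
by rewrite !big_cons; case: (P a); rewrite ?DrD IH.
Qed.

Definition Dk y k a := iter k (Dr y) a.

Lemma DkD y k a b : Dk y k (a + b) = Dk y k a + Dk y k b.
Proof. by elim: k => //= k IH; rewrite IH DrD. Qed.
Lemma Dk0 y k : Dk y k 0 = 0.
Proof. by elim: k => //= k IH; rewrite IH Dr0. Qed.
Lemma DkZ y k c a : Dk y k (c *: a) = c *: Dk y k a.
Proof. by elim: k => //= k IH; rewrite IH DrZ. Qed.
Lemma Dk_sum y k I (r : seq I) (P : pred I) (F : I -> A) :
  Dk y k (\sum_(i <- r | P i) F i) = \sum_(i <- r | P i) Dk y k (F i).
Proof.
elim: r => [|a r IH]; first by rewrite !big_nil Dk0.
by rewrite !big_cons; case: (P a); rewrite ?DkD IH.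
Qed.
Lemma DkS y k a : Dk y k.+1 a = Dk y k (Dr y a).
Proof. by rewrite /Dk iterSr. Qed.
Lemma Dk_ge y k l a : (k <= l)%N -> Dk y k a = 0 -> Dk y l a = 0.
Proof.
move=> kl h; rewrite -(subnK kl) /Dk iterD -/(Dk y k a) h.
exact: Dk0.
Qed.
Lemma Dk_alg y k c : (0 < k)%N -> Dk y k (c *: 1) = 0.
Proof. by case: k => // k _; rewrite DkS Dr_alg Dk0. Qed.

Lemma Leib y n : forall j l u v, (j + l = n)%N -> Dk y j.+1 u = 0 ->
  Dk y l.+1 v = 0 -> Dk y n (u * v) = 'C(n, j)%:R *: (Dk y j u * Dk y l v).
Proof.
elim: n => [|n IH] j l u v.
  by case: j => // ; case: l => // _ _ _; rewrite bin0 scale1r.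
move=> jl hu hv; rewrite DkS DrM DkD.
case: j jl hu => [|j] jl hu.
  have Du : Dr y u = 0 by rewrite -hu.
  rewrite Du mul0r Dk0 add0r.
  case: l jl hv => [|l] jl hv //.
  have e : l = n by move: jl; rewrite add0n => -[].
  subst l.
  rewrite (IH 0%N n u (Dr y v)) //; last by rewrite -DkS.
  by rewrite !bin0 -DkS.
case: l jl hv => [|l] jl hv.
  have Dv : Dr y v = 0 by rewrite -hv.
  rewrite Dv mulr0 Dk0 addr0.
  have e : j = n by move: jl; rewrite addn0 => -[].
  subst j.
  rewrite (IH n 0%N (Dr y u) v) ?addn0 //; last by rewrite -DkS.
  by rewrite !binn -DkS.
have jl' : (j + l.+1 = n)%N by move: jl; rewrite addSn => -[].
have jl2 : (j.+1 + l = n)%N by rewrite addSn -addnS.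
rewrite (IH j l.+1 (Dr y u) v) //; last by rewrite -DkS.
rewrite (IH j.+1 l u (Dr y v)) //; last by rewrite -DkS.
rewrite -!DkS -scalerDl -natrD.
by rewrite -jl' binS addnC.
Qed.

Variable y : A.
Hypothesis sy : s y = y.

Lemma s_Dr a : s (Dr y a) = - Dr y (s a).
Proof. by rewrite /Dr sB !sM sy opprB. Qed.
Lemma s_Dk k a : s (Dk y k a) = (-1) ^+ k *: Dk y k (s a).
Proof.
elim: k a => [|k IH] a; first by rewrite scale1r.
rewrite /= s_Dr -/(Dk y k a) IH DrZ exprS mulN1r scaleNr.
done.
Qed.
Lemma Dk_s k a : Dk y k (s a) = (-1) ^+ k *: s (Dk y k a).
Proof.
by rewrite s_Dk scalerA -expr2 -exprM mulnC exprM sqrrN expr1n expr1n scale1r.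
Qed.

Lemma sq_step M a : Dk y M.+1 a = 0 ->
  Dk y M.*2 (s a * a) = ('C(M.*2, M)%:R * (-1) ^+ M) *: (s (Dk y M a) * Dk y M a).
Proof.
move=> h; rewrite (Leib (j:=M) (l:=M)) ?addnn //; last first.
  by rewrite Dk_s h s0 scaler0.
by rewrite Dk_s -scalerAl scalerA.
Qed.

End Star.


Section Gen.
Variables (R : realType) (A : algType R[i]) (s : A -> A).
Hypothesis Hs : is_star s.
Variables (m : nat) (x : 'I_m -> A) (k : 'I_m -> 'I_m -> R[i]).
Hypothesis sx : forall p, s (x p) = x p.
Hypothesis hcomm : forall p q, Dr (x p) (x q) = k p q *: 1.
Hypothesis nilp : forall p a, exists N, Dk (x p) N a = 0.
Hypothesis CS : forall a, (forall p, Dr (x p) a = 0) -> exists c, a = c *: 1.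

Lemma alg_central (c : R[i]) (a : A) : (c *: 1) * a = a * (c *: 1).
Proof. by rewrite -scalerAl mul1r -scalerAr mulr1. Qed.

Lemma Dcomm p q a : Dr (x p) (Dr (x q) a) = Dr (x q) (Dr (x p) a).
Proof.
rewrite {1}/Dr DrD DrN !DrM hcomm alg_central.
set D := Dr (x q) a.
rewrite opprD [- (D * x p) - _]addrC addrACA subrr add0r.
by [].
Qed.

Lemma Dk_comm p q M a : Dr (x q) (Dk (x p) M a) = Dk (x p) M (Dr (x q) a).
Proof. by elim: M => //= M IH; rewrite Dcomm -/(Dk (x p) M a) IH. Qed.

Lemma bound (T : finType) (F : T -> A) p : exists N, forall i, Dk (x p) N (F i) = 0.
Proof.
have [Nf hN] := fin_all_exists (fun i => nilp p (F i)).
exists (\max_i Nf i) => i; apply: Dk_ge (hN i); exact: leq_bigmax.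
Qed.

Lemma norm_conj (c : R[i]) : conjc c * c = `|c| ^+ 2.
Proof. by change (c^* * c = `|c|^+2); rewrite mulrC -normCK. Qed.

Lemma POS_S (S : seq 'I_m) : forall n (F : 'I_n -> A),
  (forall i q, q \notin S -> Dr (x q) (F i) = 0) ->
  \sum_i s (F i) * F i = 0 -> forall i, F i = 0.
Proof.
elim: S => [|p S IH] n F hF hsum.
  have [c hc] := fin_all_exists (fun i => CS (fun q => hF i q isT)).
  have e : \sum_i s (F i) * F i = (\sum_i `|c i| ^+ 2) *: (1 : A).
    rewrite scaler_suml; apply: eq_bigr => i _.
    by rewrite hc (s_alg Hs) -scalerAl mul1r scalerA norm_conj.
  move: hsum; rewrite e => /eqP; rewrite scaler_eq0 oner_eq0 orbF => /eqP h0.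
  have h1 := psumr_eq0P (fun i _ => exprn_ge0 2 (normr_ge0 (c i))) h0.
  move=> i; rewrite hc.
  have /eqP := h1 i isT; rewrite sqrf_eq0 normr_eq0 => /eqP ->.
  by rewrite scale0r.
have [N hN] := bound F p.
elim: N n F hF hsum hN => [|N IHN] n F hF hsum hN i; first by have := hN i.
pose G := fun i => Dk (x p) N (F i).
have hG : forall i q, q \notin S -> Dr (x q) (G i) = 0.
  move=> j q hq; case: (q =P p) => [->|/eqP qp].
    exact: (hN j).
  by rewrite /G Dk_comm hF ?Dk0 // in_cons negb_or qp.
have hsG : \sum_i s (G i) * G i = 0.
  have := congr1 (Dk (x p) N.*2) hsum; rewrite Dk0 Dk_sum.
  under eq_bigr => j _ do rewrite (sq_step Hs (sx p) (hN j)).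
  rewrite -scaler_sumr => /eqP; rewrite scaler_eq0 => /orP[|/eqP //].
  rewrite mulf_eq0 signr_eq0 orbF pnatr_eq0 eqn0Ngt bin_gt0 => h.
  by move: h; rewrite -addnn leq_addl.
have hG0 := IH n G hG hsG.
exact: (IHN n F hF hsum hG0).
Qed.

Lemma POS n (F : 'I_n -> A) :
  \sum_i s (F i) * F i = 0 -> forall i, F i = 0.
Proof.
apply: (POS_S (S := enum 'I_m)) => i q; by rewrite mem_enum.
Qed.


Lemma kill n l (P : 'M[A]_(n,l)) (c : 'I_l -> A) p :
  (forall j, \sum_i s (P i j) * P i j = c j) ->
  (forall M, (forall i j, Dk (x p) M.+2 (P i j) = 0) ->
     forall j, Dk (x p) (M.+1).*2 (c j) = 0) ->
  forall i j, Dr (x p) (P i j) = 0.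
Proof.
move=> hs hc.
have [N hN] := bound (fun ij : 'I_n * 'I_l => P ij.1 ij.2) p.
have {}hN : forall i j, Dk (x p) N.+1 (P i j) = 0.
  by move=> i j; apply: (Dk_ge (leqnSn N)); exact: (hN (i, j)).
elim: N hN => [|M IH] hN; first by move=> i j; exact: hN.
apply: IH => i j.
have hj := hc M hN j.
move: hj; rewrite -hs Dk_sum.
under eq_bigr => i' _ do rewrite (sq_step Hs (sx p) (hN i' j)).
rewrite -scaler_sumr => /eqP; rewrite scaler_eq0 => /orP[|/eqP h].
  rewrite mulf_eq0 signr_eq0 orbF pnatr_eq0 eqn0Ngt bin_gt0 => h.
  by move: h; rewrite -addnn leq_addl.
exact: (POS h i).
Qed.

Lemma kill_proj n (P : 'M[A]_n) :
  (forall j, \sum_i s (P i j) * P i j = P j j) ->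
  forall i j p, Dr (x p) (P i j) = 0.
Proof.
move=> hs i j p; apply: (kill hs) => M hM j'.
apply: (Dk_ge _ (hM j' j')).
by rewrite -addnn addSn addnS !ltnS leq_addr.
Qed.

Lemma kill_unit n l (P : 'M[A]_(n,l)) :
  (forall j, \sum_i s (P i j) * P i j = 1) ->
  forall i j p, Dr (x p) (P i j) = 0.
Proof.
move=> hs i j p; apply: (kill (c := fun _ => 1) hs) => M hM j'.
by rewrite -(scale1r (1 : A)) Dk_alg.
Qed.

End Gen.


Section PBW.
Variables (R : realType) (A : algType R[i]).
Variables (m : nat) (x : 'I_m -> A) (k : 'I_m -> 'I_m -> R[i]).
Hypothesis hcomm : forall p q, Dr (x p) (x q) = k p q *: 1.

Definition nilD y (a : A) := exists N, Dk y N a = 0.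

Lemma nilD_add y a b : nilD y a -> nilD y b -> nilD y (a + b).
Proof.
move=> [Na ha] [Nb hb]; exists (Na + Nb)%N.
rewrite DkD (Dk_ge (leq_addr _ _) ha) (Dk_ge (leq_addl _ _) hb) addr0 //.
Qed.
Lemma nilD_scale y c a : nilD y a -> nilD y (c *: a).
Proof. by move=> [N h]; exists N; rewrite DkZ h scaler0. Qed.
Lemma nilD_mul y a b : nilD y a -> nilD y b -> nilD y (a * b).
Proof.
move=> [Na ha] [Nb hb]; exists (Na + Nb)%N.
rewrite (Leib (j := Na) (l := Nb)) //.
- by rewrite ha mul0r scaler0.
- exact: (Dk_ge (leqnSn _) ha).
- exact: (Dk_ge (leqnSn _) hb).
Qed.
Lemma nilD_1 y : nilD y 1.
Proof. by exists 1%N; rewrite -(scale1r (1 : A)) Dk_alg. Qed.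
Lemma nilD_x p q : nilD (x p) (x q).
Proof. by exists 2%N; rewrite DkS /= hcomm Dr_alg. Qed.
Lemma nilD_pow y a n : nilD y a -> nilD y (a ^+ n).
Proof.
move=> h; elim: n => [|n IH]; first exact: nilD_1.
by rewrite exprS; apply: nilD_mul.
Qed.
Lemma nilD_mon p e : nilD (x p) (monomial x e).
Proof.
rewrite /monomial; apply: (big_ind (nilD (x p))).
- exact: nilD_1.
- exact: nilD_mul.
- by move=> i _; apply: nilD_pow; apply: nilD_x.
Qed.

Hypothesis pbw : pbw_basis x.

Lemma nilp_all p a : nilD (x p) a.
Proof.
have [s0 [c0 ->]] := pbw.1 a.
apply: (big_ind (nilD (x p))).
- by exists 0%N.
- exact: nilD_add.
- by move=> e _; apply: nilD_scale; apply: nilD_mon.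
Qed.


Section Deriv.
Variables (q q' : 'I_m).
Let y := x q'.
Let kap := k q' q.
Hypothesis hother : forall j, j != q -> k q' j = 0.

Lemma D_pow0 j n : j != q -> Dr y (x j ^+ n) = 0.
Proof.
move=> jq; elim: n => [|n IH].
  by rewrite expr0 -(scale1r (1 : A)) Dr_alg.
by rewrite exprS DrM IH /y hcomm hother // scale0r mul0r mulr0 addr0.
Qed.

Lemma D_powq n : Dr y (x q ^+ n) = (n%:R * kap) *: x q ^+ n.-1.
Proof.
elim: n => [|n IH].
  by rewrite expr0 -(scale1r (1 : A)) Dr_alg mul0r scale0r.
rewrite exprS DrM IH /y hcomm -scalerAl mul1r -scalerAr /=.
case: n IH => [|n] IH.
  by rewrite mul0r scale0r addr0 mul1r expr0.
rewrite -exprS -scalerDl mulrSr mulrDl mul1r addrC -/kap; congr (_ *: _).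
by rewrite [in RHS]mulrSr [in RHS]mulrSr !mulrDl !mul1r.
Qed.

Definition dec (e : {ffun 'I_m -> nat}) : {ffun 'I_m -> nat} :=
  [ffun j => if j == q then (e j).-1 else e j].

Lemma D_prod (e : {ffun 'I_m -> nat}) (r : seq 'I_m) : uniq r ->
  Dr y (\prod_(j <- r) x j ^+ e j) =
  (if q \in r then (e q)%:R * kap else 0) *: \prod_(j <- r) x j ^+ dec e j.
Proof.
elim: r => [|a r IH].
  by rewrite !big_nil -(scale1r (1 : A)) Dr_alg scale0r.
move=> /= /andP[ar ur]; rewrite !big_cons DrM IH // in_cons.
case: (a =P q) => [aq|/eqP aq].
  subst a; rewrite (negbTE ar) scale0r mulr0 addr0 D_powq eqxx /=.
  rewrite -scalerAl; congr (_ *: (_ * _)).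
    by rewrite /dec ffunE eqxx.
  apply: eq_big_seq => j jr; rewrite /dec ffunE.
  by case: (j =P q) => // jq; subst j; rewrite jr in ar.
rewrite D_pow0 // mul0r add0r /= -scalerAr; congr (_ *: (_ * _)).
  by rewrite eq_sym (negbTE aq).
by rewrite /dec ffunE (negbTE aq).
Qed.

Lemma D_mon (e : {ffun 'I_m -> nat}) :
  Dr y (monomial x e) = ((e q)%:R * kap) *: monomial x (dec e).
Proof.
by rewrite /monomial (D_prod e (index_enum_uniq _)) mem_index_enum.
Qed.

End Deriv.

Hypothesis partner : forall q, exists q', k q' q != 0 /\ forall j, j != q -> k q' j = 0.

Lemma iterop_add (v : A) n : iterop n +%R v 0 = v *+ n.
Proof. by rewrite Monoid.iteropE; elim: n => //= n ->; rewrite mulrS. Qed.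

Definition e0 : {ffun 'I_m -> nat} := [ffun _ => 0%N].

Lemma mon0 : monomial x e0 = 1.
Proof. by rewrite /monomial big1 // => i _; rewrite ffunE expr0. Qed.

Lemma CSpbw a : (forall p, Dr (x p) a = 0) -> exists c, a = c *: 1.
Proof.
move=> ha.
have [s0 [c0 ha0]] := pbw.1 a.
pose s1 := undup s0.
pose c1 := fun e => c0 e *+ count_mem e s0.
have ha1 : a = \sum_(e <- s1) c1 e *: monomial x e.
  rewrite ha0 -[LHS]big_undup_iterop_count.
  change (\sum_(i <- undup s0) iterop (count_mem i s0) +%R (c0 i *: monomial x i) 0 = \sum_(e <- s1) c1 e *: monomial x e).
  apply: eq_bigr => e _.
  by rewrite iterop_add /c1 scalerMnl.
have us1 : uniq s1 := undup_uniq s0.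
have key : forall e, e \in s1 -> (exists q, 0 < e q)%N -> c1 e = 0.
  move=> e he [q hq].
  have [q' [kq hoth]] := partner q.
  have hD2 : \sum_(f <- s1) (c1 f * ((f q)%:R * k q' q)) *: monomial x (dec q f) = 0.
    rewrite -[RHS](ha q') ha1 Dr_sum; apply: eq_bigr => f _.
    by rewrite DrZ (D_mon hoth) scalerA.
  rewrite (bigID (fun f : {ffun 'I_m -> nat} => f q == 0)%N) /= big1 ?add0r in hD2; last first.
    by move=> f /eqP ->; rewrite mul0r mulr0 scale0r.
  rewrite -big_filter in hD2.
  set s2 := filter _ s1 in hD2.
  pose inc (g : {ffun 'I_m -> nat}) : {ffun 'I_m -> nat} :=
    [ffun j => if j == q then (g j).+1 else g j].
  pose c2 g := c1 (inc g) * (((inc g) q)%:R * k q' q).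
  have hinc : forall f : {ffun 'I_m -> nat}, (0 < f q)%N -> inc (dec q f) = f.
    move=> f hf; apply/ffunP => j; rewrite !ffunE.
    by case: (j =P q) => [->|//]; rewrite prednK.
  have hD3 : \sum_(g <- map (dec q) s2) c2 g *: monomial x g = 0.
    rewrite big_map -[RHS]hD2; apply: eq_big_seq => f.
    by rewrite mem_filter => /andP[hf _]; rewrite /c2 hinc // lt0n.
  have inj : {in s2 &, injective (dec q)}.
    move=> f g /=; rewrite !mem_filter -!lt0n => /andP[hf _] /andP[hg _] efg.
    by rewrite -(hinc f hf) -(hinc g hg) efg.
  have us2 : uniq (map (dec q) s2) by rewrite map_inj_in_uniq // filter_uniq.
  have es2 : e \in s2 by rewrite mem_filter -lt0n hq.
  have := pbw.2 _ c2 us2 hD3 (dec q e) (map_f _ es2).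
  rewrite /c2 hinc // => /eqP; rewrite !mulf_eq0 pnatr_eq0 (negbTE kq) orbF.
  by rewrite eqn0Ngt hq orbF => /eqP.
exists (\sum_(e <- s1 | e == e0) c1 e).
rewrite ha1 scaler_suml [RHS]big_mkcond /=; apply: eq_big_seq => e he.
case: (e =P e0) => [->|ne]; first by rewrite mon0.
rewrite key ?scale0r //.
case: (pickP (fun q => 0 < e q)%N) => [q hq|h]; first by exists q.
exfalso; apply: ne; apply/ffunP => q; rewrite ffunE.
by have := h q; rewrite lt0n => /negbFE/eqP.
Qed.

End PBW.

Section WrapP4.
Local Open Scope sesquilinear_scope.

Lemma sort_perm n (b : 'I_n -> bool) :
  exists (sg : {perm 'I_n}) r, (r <= n)%N /\ forall i, b (sg i) = (i < r)%N.
Proof.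
pose L := filter b (enum 'I_n) ++ filter (predC b) (enum 'I_n).
have pL : perm_eq L (ord_tuple n) by rewrite val_ord_tuple perm_filterC.
have [sg hsg] := tuple_permP pL.
have hnth : forall i : 'I_n, nth i L i = sg i.
  by move=> i; rewrite hsg -tnth_nth tnth_mktuple tnth_ord_tuple.
have szL : size L = n by rewrite hsg size_tuple.
exists sg, (size (filter b (enum 'I_n))); split.
  by rewrite -[X in (_ <= X)%N]szL size_cat leq_addr.
move=> i; rewrite -hnth nth_cat; case: ifP => hi.
  by have := mem_nth i hi; rewrite mem_filter => /andP[].
have hi2 : (i - size (filter b (enum 'I_n)) < size (filter (predC b) (enum 'I_n)))%N.
  move: szL; rewrite size_cat => szL; have := ltn_ord i; move: hi; lia.
have := mem_nth i hi2; rewrite mem_filter => /andP[/= /negbTE -> _].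
by [].
Qed.

Section LA.
Variable C : numClosedFieldType.

Definition hidem n (P : 'M[C]_n) := P *m P = P /\ P ^t* = P.
Definition unitC n (U : 'M[C]_n) := U *m U ^t* = 1%:M /\ U ^t* *m U = 1%:M.

Lemma rank_sandwich a b c d (X : 'M[C]_(a, b)) (Y : 'M[C]_(c, d))
  (L : 'M[C]_(c, a)) (Rt : 'M[C]_(b, d)) (L' : 'M[C]_(a, c)) (R' : 'M[C]_(d, b)) :
  Y = L *m X *m Rt -> X = L' *m Y *m R' -> \rank X = \rank Y.
Proof.
move=> hY hX; apply/eqP; rewrite eqn_leq.
have H : forall p q r s (M : 'M[C]_(p, q)) (A1 : 'M[C]_(r, p)) (B1 : 'M[C]_(q, s)),
    (\rank (A1 *m M *m B1) <= \rank M)%N.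
  by move=> p q r s M A1 B1; apply: leq_trans (mxrankM_maxl _ _) (mxrankM_maxr _ _).
by rewrite {1}hX hY !H.
Qed.

Lemma tC_mul m n p (A : 'M[C]_(m, n)) (B : 'M[C]_(n, p)) :
  (A *m B) ^t* = B ^t* *m A ^t*.
Proof. by rewrite trmx_mul map_mxM. Qed.

Lemma tC_K m n (A : 'M[C]_(m, n)) : A ^t* ^t* = A.
Proof. exact: trmxCK. Qed.

Lemma unitC_conj n (U : 'M[C]_n) : unitC U -> unitC (U ^t*).
Proof. by case=> h1 h2; split; rewrite tC_K. Qed.

Lemma unitC_mul n (U V : 'M[C]_n) : unitC U -> unitC V -> unitC (U *m V).
Proof.
move=> [u1 u2] [v1 v2]; split; rewrite tC_mul.
  by rewrite mulmxA -(mulmxA U) v1 mulmx1 u1.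
by rewrite mulmxA -(mulmxA _ _ U) u2 mulmx1 v2.
Qed.

Lemma rank_conjU n (U : 'M[C]_n) (X : 'M[C]_n) : unitC U ->
  \rank (U *m X *m U ^t*) = \rank X.
Proof.
move=> [u1 u2]; apply/esym; apply: (rank_sandwich (L' := U ^t*) (R' := U)) => //.
by rewrite !mulmxA u2 mul1mx -mulmxA u2 mulmx1.
Qed.

Lemma CL n (P : 'M[C]_n) : hidem P ->
  exists r (V : 'M[C]_n), [/\ (r <= n)%N, unitC V & V *m P *m V ^t* = pid_mx r].
Proof.
move=> [PP Ph].
have nP : P \is normalmx by apply/normalmxP; rewrite Ph.
have eP := orthomx_spectralP nP.
set S := spectralmx P in eP; set d := spectral_diag P in eP.
have S1 : S *m S ^t* = 1%:M by apply/unitarymxP; apply: spectral_unitarymx.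
have S2 : S ^t* *m S = 1%:M by apply: mulmx1C.
rewrite invmx_unitary ?spectral_unitarymx // in eP.
have eD : S *m P *m S ^t* = diag_mx d.
  by rewrite eP !mulmxA S1 mul1mx -mulmxA S1 mulmx1.
have DD : diag_mx d *m diag_mx d = diag_mx d.
  rewrite -eD !mulmxA -(mulmxA _ _ S) S2 mulmx1 -(mulmxA _ P P) PP.
  by [].
have d01 : forall i, d 0 i = 0 \/ d 0 i = 1.
  move=> i; have := congr1 (fun M : 'M[C]_n => M i i) DD; rewrite mulmx_diag !mxE eqxx mulr1n.
  rewrite mulr1n => /eqP; rewrite -subr_eq0 -{3}(mulr1 (d 0 i)) -mulrBr mulf_eq0 subr_eq0.
  by case/orP => /eqP ->; [left|right].
have [sg [r [rn hsg]]] := sort_perm (fun i => d 0 i == 1).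
exists r, (perm_mx sg *m S); split => //.
  apply: unitC_mul; last by split.
  have hc : (perm_mx sg : 'M[C]_n) ^t* = perm_mx sg^-1.
    by rewrite -map_trmx map_perm_mx tr_perm_mx.
  split; rewrite hc -perm_mxM.
    by rewrite mulgV perm_mx1.
  by rewrite mulVg perm_mx1.
rewrite tC_mul !mulmxA -(mulmxA (perm_mx sg) S P) -(mulmxA (perm_mx sg) (S *m P)) eD.
have hc : (perm_mx sg : 'M[C]_n) ^t* = perm_mx sg^-1.
  by rewrite -map_trmx map_perm_mx tr_perm_mx.
rewrite hc -col_permE -row_permE; apply/matrixP => i j; rewrite !mxE.
rewrite (inj_eq perm_inj).
have := hsg i; case: (d01 (sg i)) => -> h.
  by rewrite eq_sym oner_eq0 in h; rewrite -h andbF mul0rn.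
by rewrite eqxx in h; rewrite -h andbT.
Qed.


Lemma CL2 n (P Q : 'M[C]_n) : hidem P -> hidem Q -> \rank P = \rank Q ->
  exists U, unitC U /\ P = U *m Q *m U ^t*.
Proof.
move=> hP hQ hr.
have [r1 [V [r1n hV eV]]] := CL hP.
have [r2 [W [r2n hW eW]]] := CL hQ.
have e12 : r1 = r2.
  by rewrite -(rank_pid_mx C r1n r1n) -(rank_pid_mx C r2n r2n) -eV -eW !rank_conjU.
subst r2.
exists (V ^t* *m W); split; first by apply: unitC_mul => //; apply: unitC_conj.
have [v1 v2] := hV.
have -> : P = V ^t* *m (V *m P *m V ^t*) *m V.
  by rewrite !mulmxA v2 mul1mx -mulmxA v2 mulmx1.
by rewrite eV -eW tC_mul tC_K !mulmxA.
Qed.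

Definition padC k N (M : 'M[C]_k) : 'M[C]_N :=
  \matrix_(i < N, j < N)
    (match (insub (val i) : option 'I_k), (insub (val j) : option 'I_k) with
     | Some i', Some j' => M i' j'
     | _, _ => 0
     end).

Definition Emb k N : 'M[C]_(k, N) := \matrix_(i, j) ((val i == val j)%:R).

Lemma mulE_r k N p (X : 'M[C]_(p, k)) i j :
  (X *m Emb k N) i j = match (insub (val j) : option 'I_k) with Some j' => X i j' | None => 0 end.
Proof.
rewrite mxE; case: insubP => [j' _ ej|hj].
  rewrite (bigD1 j') //= big1 ?addr0; first by rewrite mxE ej eqxx mulr1.
  move=> l lj; rewrite mxE -ej.
  by case: (val l =P val j') => [/val_inj e|_]; [rewrite e eqxx in lj | rewrite mulr0].
apply: big1 => l _; rewrite mxE.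
case: (val l =P val j) => [e|_]; last by rewrite mulr0.
by move: hj; rewrite -e ltn_ord.
Qed.

Lemma mulE_l k N p (X : 'M[C]_(k, p)) i j :
  ((Emb k N)^T *m X) i j = match (insub (val i) : option 'I_k) with Some i' => X i' j | None => 0 end.
Proof.
rewrite mxE; case: insubP => [i' _ ei|hi].
  rewrite (bigD1 i') //= big1 ?addr0; first by rewrite !mxE ei eqxx mul1r.
  move=> l li; rewrite !mxE -ei.
  case: (val l =P val i') => [/val_inj e|_]; first by rewrite e eqxx in li.
  by rewrite mul0r.
apply: big1 => l _; rewrite !mxE.
case: (val l =P val i) => [e|_]; last by rewrite mul0r.
by move: hi; rewrite -e ltn_ord.
Qed.

Lemma padC_E k N (M : 'M[C]_k) : padC N M = (Emb k N)^T *m M *m Emb k N.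
Proof.
apply/matrixP => i j; rewrite mulE_r mxE.
case: (insub (val j)) => [j'|]; rewrite ?mulE_l;
  by case: (insub (val i)) => [i'|].
Qed.

Lemma Emb_id k N : (k <= N)%N -> Emb k N *m (Emb k N)^T = 1%:M.
Proof.
move=> kN; apply/matrixP => i j.
rewrite !mxE (bigD1 (widen_ord kN i)) //= big1 ?addr0.
  by rewrite !mxE eqxx mul1r eq_sym.
move=> l li; rewrite !mxE.
case: (val i =P val l) => [e|_]; last by rewrite mul0r.
by move: li; rewrite (_ : l = widen_ord kN i) ?eqxx //; apply: val_inj.
Qed.

Lemma Emb_conj k N : (Emb k N) ^ Num.conj = Emb k N.
Proof. by apply/matrixP => i j; rewrite !mxE rmorph_nat. Qed.

Lemma hidem_pad k N (P : 'M[C]_k) : (k <= N)%N -> hidem P -> hidem (padC N P).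
Proof.
move=> kN [PP Ph]; rewrite padC_E; split.
  have -> : (Emb k N)^T *m P *m Emb k N *m ((Emb k N)^T *m P *m Emb k N) =
      (Emb k N)^T *m P *m (Emb k N *m (Emb k N)^T) *m P *m Emb k N.
    by rewrite !mulmxA.
  by rewrite Emb_id // mulmx1 -(mulmxA _ P P) PP.
rewrite !trmx_mul !map_mxM.
change (Emb k N ^t* *m (P ^t* *m (Emb k N)^T ^t*) = (Emb k N)^T *m P *m Emb k N).
rewrite Ph mulmxA trmxK Emb_conj; congr (_ *m _ *m _).
by rewrite -map_trmx Emb_conj.
Qed.

Lemma rank_pad k N (P : 'M[C]_k) : (k <= N)%N -> \rank (padC N P) = \rank P.
Proof.
move=> kN; apply/esym; apply: (rank_sandwich (L' := Emb k N) (R' := (Emb k N)^T)).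
  exact: padC_E.
by rewrite padC_E !mulmxA Emb_id // mul1mx -mulmxA Emb_id // mulmx1.
Qed.

End LA.

End WrapP4.

Section WrapP5.
Local Open Scope sesquilinear_scope.

Section Main.
Variables (R : realType) (A : algType R[i]) (s : A -> A).
Hypothesis Hs : is_star s.
Variables (m : nat) (x : 'I_m -> A) (k : 'I_m -> 'I_m -> R[i]).
Hypothesis sx : forall p, s (x p) = x p.
Hypothesis hcomm : forall p q, Dr (x p) (x q) = k p q *: 1.
Hypothesis pbw : pbw_basis x.
Hypothesis partner : forall q, exists q', k q' q != 0 /\ forall j, j != q -> k q' j = 0.

Let nilp := nilp_all hcomm pbw.
Let CS := CSpbw hcomm pbw partner.

Local Notation ia := (GRing.in_alg A).

Definition coefA (a : A) : R[i] := epsilon (inhabits 0) (fun c => a = c%:A).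

Lemma coefA_spec a : (exists c, a = c%:A) -> a = (coefA a)%:A.
Proof. move=> h; exact: (epsilon_spec (inhabits 0) (fun c => a = c%:A) h). Qed.

Lemma ia_inj : injective (fun c : R[i] => c%:A : A).
Proof.
move=> c d /eqP; rewrite -subr_eq0 -scalerBl scaler_eq0 oner_eq0 orbF subr_eq0.
by move/eqP.
Qed.

Lemma coefA_alg c : coefA (c%:A) = c.
Proof. by apply: ia_inj; rewrite -coefA_spec //; exists c. Qed.

Definition CM p q (M : 'M[A]_(p, q)) : 'M[R[i]]_(p, q) := map_mx coefA M.

Lemma CM_ia p q (M : 'M[R[i]]_(p, q)) : CM (map_mx ia M) = M.
Proof. by apply/matrixP => i j; rewrite !mxE coefA_alg. Qed.

Lemma mapia_inj p q : injective (map_mx ia : 'M[R[i]]_(p, q) -> 'M[A]_(p, q)).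
Proof. by move=> M N e; rewrite -(CM_ia M) e CM_ia. Qed.

Lemma mxstar_ia p q (M : 'M[R[i]]_(p, q)) : mxstar s (map_mx ia M) = map_mx ia (M ^t*).
Proof. by apply/matrixP => i j; rewrite !mxE (s_alg Hs). Qed.

Lemma central_mx p q (M : 'M[A]_(p, q)) :
  (forall i j r, Dr (x r) (M i j) = 0) -> M = map_mx ia (CM M).
Proof.
move=> h; apply/matrixP => i j; rewrite !mxE /=.
by apply: coefA_spec; apply: CS => r; apply: h.
Qed.

Lemma proj_C p (P : 'M[A]_p) : is_projector s P -> P = map_mx ia (CM P) /\ hidem (CM P).
Proof.
move=> [PP Ps].
have hs : forall j, \sum_i s (P i j) * P i j = P j j.
  move=> j; have e : mxstar s P *m P = P by rewrite Ps PP.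
  have := congr1 (fun M : 'M[A]_p => M j j) e; rewrite mxE => <-.
  by apply: eq_bigr => i _; rewrite mxE.
have eP := central_mx (kill_proj Hs sx hcomm nilp CS hs).
split => //; split; apply: mapia_inj; rewrite ?map_mxM -eP //.
by rewrite -mxstar_ia -eP.
Qed.

Lemma unit_C p (U : 'M[A]_p) : Defs.is_unitary s U -> U = map_mx ia (CM U) /\ unitC (CM U).
Proof.
move=> [U1 U2].
have hs : forall j, \sum_i s (U i j) * U i j = 1.
  move=> j; have := congr1 (fun M : 'M[A]_p => M j j) U2.
  rewrite /= [in RHS]mxE eqxx mulr1n mxE => <-.
  by apply: eq_bigr => i _; rewrite mxE.
have eU := central_mx (kill_unit Hs sx hcomm nilp CS hs).
have h1 : map_mx ia (1%:M : 'M[R[i]]_p) = 1%:M by rewrite map_scalar_mx rmorph1.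
split => //; split; apply: mapia_inj; rewrite map_mxM -mxstar_ia -eU h1 //.
Qed.

Lemma of_C p (P : 'M[R[i]]_p) : hidem P -> is_projector s (map_mx ia P).
Proof. by move=> [PP Ph]; split; rewrite -?map_mxM ?PP // mxstar_ia Ph. Qed.

Lemma unit_of_C p (U : 'M[R[i]]_p) : unitC U -> Defs.is_unitary s (map_mx ia U).
Proof.
have h1 : map_mx ia (1%:M : 'M[R[i]]_p) = 1%:M by rewrite map_scalar_mx rmorph1.
by move=> [U1 U2]; split; rewrite mxstar_ia -map_mxM ?U1 ?U2 h1.
Qed.

Lemma padmx_ia p N (M : 'M[R[i]]_p) : padmx N (map_mx ia M) = map_mx ia (padC N M).
Proof.
apply/matrixP => i j; rewrite !mxE.
case: (insub (val i) : option 'I_p) => [i'|]; case: (insub (val j) : option 'I_p) => [j'|];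
  by rewrite ?mxE ?rmorph0.
Qed.


Lemma map_mx0' (T1 T2 : nmodType) (f : T1 -> T2) p q : f 0 = 0 ->
  map_mx f (0 : 'M[T1]_(p, q)) = 0.
Proof. by move=> h; apply/matrixP => i j; rewrite !mxE h. Qed.

Lemma coefA0 : coefA 0 = 0.
Proof. by rewrite -(scale0r (1 : A)) coefA_alg. Qed.

Lemma CM_block p q (X : 'M[A]_p) (Y : 'M[A]_q) :
  CM (block_mx X 0 0 Y) = block_mx (CM X) 0 0 (CM Y).
Proof. by rewrite /CM map_block_mx !map_mx0' // coefA0. Qed.

Lemma ia_block p q (X : 'M[R[i]]_p) (Y : 'M[R[i]]_q) :
  map_mx ia (block_mx X 0 0 Y) = block_mx (map_mx ia X) 0 0 (map_mx ia Y).
Proof. by rewrite map_block_mx !map_mx0' // rmorph0. Qed.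

Lemma hidem_block p q (X : 'M[R[i]]_p) (Y : 'M[R[i]]_q) :
  hidem X -> hidem Y -> hidem (block_mx X 0 0 Y).
Proof.
move=> [XX Xh] [YY Yh]; split.
  by rewrite mulmx_block !mulmx0 !mul0mx !addr0 !add0r XX YY.
rewrite /= tr_block_mx map_block_mx !trmx0 !map_mx0' ?rmorph0 //.
by rewrite -/(X ^t*) -/(Y ^t*) Xh Yh.
Qed.

Definition rk (p : pmx A) : nat := \rank (CM (projT2 p)).

Lemma rk_pdsum p q : rk (pdsum p q) = (rk p + rk q)%N.
Proof. by rewrite /rk /= CM_block rank_diag_block_mx. Qed.

Lemma projC (p : pmx A) : is_proj s p ->
  projT2 p = map_mx ia (CM (projT2 p)) /\ hidem (CM (projT2 p)).
Proof. exact: proj_C. Qed.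

Lemma proj_pdsum p q : is_proj s p -> is_proj s q -> is_proj s (pdsum p q).
Proof.
move=> /projC [ep hp] /projC [eq hq].
rewrite /is_proj /= ep eq -ia_block.
exact: of_C (hidem_block hp hq).
Qed.

Lemma equiv_iff p q : is_proj s p -> is_proj s q ->
  (proj_equiv s p q <-> rk p = rk q).
Proof.
case: p => kp P; case: q => kq Q /projC [/= eP hP] /projC [/= eQ hQ].
rewrite /rk /=; split.
  move=> [N [u [kpN [kqN [hu he]]]]].
  have [eu hU] := unit_C hu.
  move: he; rewrite /= eP eQ eu !padmx_ia mxstar_ia -!map_mxM => /mapia_inj he.
  rewrite !CM_ia -(rank_pad _ kpN) -(rank_pad _ kqN) he.
  exact: rank_conjU.
move=> hr.
have kpN : (kp <= kp + kq)%N by apply: leq_addr.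
have kqN : (kq <= kp + kq)%N by apply: leq_addl.
have [U [hU eU]] := CL2 (hidem_pad kpN hP) (hidem_pad kqN hQ)
  (etrans (rank_pad _ kpN) (etrans hr (esym (rank_pad _ kqN)))).
exists (kp + kq)%N, (map_mx ia U); split => //; split => //; split.
  exact: unit_of_C.
by rewrite /= eP eQ !padmx_ia mxstar_ia -!map_mxM eU.
Qed.


Lemma hidem1 n : hidem (1%:M : 'M[R[i]]_n).
Proof. by split; rewrite ?mulmx1 // /= trmx1 map_scalar_mx rmorph1. Qed.

Lemma hidem0 n : hidem (0 : 'M[R[i]]_n).
Proof. by split; rewrite ?mulmx0 // /= trmx0 map_mx0' ?rmorph0. Qed.

Lemma K0_main : K0_iso_Z s.
Proof.
exists (fun p q => (rk p)%:Z - (rk q)%:Z); split.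
- move=> p q p' q' hp hq hp' hq'.
  have H : (rk p)%:Z - (rk q)%:Z = (rk p')%:Z - (rk q')%:Z <->
           (rk p + rk q' = rk p' + rk q)%N by split; lia.
  rewrite H; split.
    move=> e; exists p; split => //.
    apply/equiv_iff; rewrite ?rk_pdsum; try lia;
      by repeat apply: proj_pdsum.
  move=> [r [hr he]].
  have := (equiv_iff (proj_pdsum (proj_pdsum hp hq') hr)
                     (proj_pdsum (proj_pdsum hp' hq) hr)).1 he.
  rewrite !rk_pdsum; lia.
- have rk1 : forall n, rk (existT (fun k => 'M[A]_k) n (map_mx ia (1%:M : 'M[R[i]]_n))) = n.
    by move=> n; rewrite /rk /= CM_ia mxrank1.
  have rk0 : forall n, rk (existT (fun k => 'M[A]_k) n (map_mx ia (0 : 'M[R[i]]_n))) = 0%N.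
    by move=> n; rewrite /rk /= CM_ia mxrank0.
  case=> n.
    exists (existT (fun k => 'M[A]_k) n (map_mx ia (1%:M : 'M[R[i]]_n))),
           (existT (fun k => 'M[A]_k) n (map_mx ia (0 : 'M[R[i]]_n))).
    split; [exact: of_C (hidem1 n)|exact: of_C (hidem0 n)|].
    by rewrite rk1 rk0 subr0.
  exists (existT (fun k => 'M[A]_k) n.+1 (map_mx ia (0 : 'M[R[i]]_n.+1))),
         (existT (fun k => 'M[A]_k) n.+1 (map_mx ia (1%:M : 'M[R[i]]_n.+1))).
  split; [exact: of_C (hidem0 n.+1)|exact: of_C (hidem1 n.+1)|].
  by rewrite rk1 rk0 sub0r NegzE.
- move=> p q p' q' _ _ _ _; rewrite !rk_pdsum; lia.
Qed.

End Main.

End WrapP5.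

End Aux.
Import Aux.

Lemma rc_neq0 (R : realType) (t : R) : t != 0 -> real_complex R t != 0.
Proof.
move=> h; apply/eqP => e; move/eqP: h; apply.
by have := congr1 (fun z : R[i] => let: Complex a _ := z in a) e.
Qed.

Lemma ci_neq0 (R : realType) : (Complex 0 1 : R[i]) != 0.
Proof.
apply/eqP => e.
have := congr1 (fun z : R[i] => let: Complex _ b := z in b) e.
by move=> /= /eqP; rewrite oner_eq0.
Qed.

Theorem theorem1p1 (R : realType) (n : nat) (Theta : 'M[R]_(n.*2))
    (A : algType R[i]) (star : A -> A) (x : 'I_(n.*2) -> A) :
  (1 <= n)%N ->
  admissible Theta ->
  is_star star ->
  (forall p, star (x p) = x p) ->
  (forall p q, x p * x q - x q * x p
               = (- (Complex 0 1) * real_complex R (Theta p q)) *: 1) ->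
  pbw_basis x ->
  K0_iso_Z star.
Proof.
move=> n1 [adm1 adm2] Hs sx hc pbw.
pose k := fun p q => - (Complex 0 1) * real_complex R (Theta p q).
have kneq : forall p q, Theta p q != 0 -> k p q != 0.
  by move=> p q h; rewrite /k mulf_eq0 negb_or oppr_eq0 ci_neq0 rc_neq0.
apply: (K0_main (k := k) Hs sx _ pbw).
  by move=> p q; exact: hc.
move=> q.
case oq: (odd q).
  have q0 : (0 < q)%N by case: (nat_of_ord q) oq.
  have lt : (q.-1 < n.*2)%N by apply: leq_ltn_trans (leq_pred _) (ltn_ord q).
  pose q' := Ordinal lt.
  have eq' : val q = (val q').+1 by rewrite /= prednK.
  have eo : ~~ odd q' by move: oq; rewrite eq' /= => ->.
  exists q'; split.
    have [h _] := adm1 q' q eo eq'.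
    by apply: kneq; rewrite gt_eqF.
  move=> j jq; rewrite /k; apply/eqP; rewrite mulf_eq0; apply/orP; right.
  rewrite (adm2 q' j) ?raddf0 //.
    by move=> [_ e]; move/eqP: jq; apply; apply: val_inj; rewrite e -eq'.
  move=> [ej e]; move: eo; rewrite e /= ej.
  by [].
have lt : (q.+1 < n.*2)%N.
  have := ltn_ord q; rewrite leq_eqVlt => /orP[/eqP e|//].
  have h2 : odd (n.*2) = odd q.+1 by rewrite e.
  by rewrite odd_double /= oq in h2.
pose q' := Ordinal lt.
exists q'; split.
  have [h e] := adm1 q q' (negbT oq) erefl.
  by apply: kneq; rewrite e oppr_eq0 gt_eqF.
move=> j jq; rewrite /k; apply/eqP; rewrite mulf_eq0; apply/orP; right.
rewrite (adm2 q' j) ?raddf0 //.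
  by move=> [eo _]; move: eo; rewrite /= oq.
move=> [_ e]; move/eqP: jq; apply; apply: val_inj.
by move: e => /= [].
Qed.
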